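(* Let $\beta>1$. For all $x,y\in\mathbb R$, $\Theta_1(x,y)\ge\Theta_2(x,y)$.
   Context: For $\beta>1$ and real $x\ne y$ define $\Theta_1(x,y)=\Big(\frac1{2\beta-1}\frac{x|x|^{2(\beta-1)}-y|y|^{2(\beta-1)}}{x-y}\Big)^{\frac1{2(\beta-1)}}$ and $\Theta_2(x,y)=\Big(\frac1\beta\frac{x|x|^{\beta-1}-y|y|^{\beta-1}}{x-y}\Big)^{\frac1{\beta-1}}$ (the quotients are positive since both numerator maps are strictly increasing), and $\Theta_1(x,x)=\Theta_2(x,x)=0$. These are the absolute values of mean-value points for $t\mapsto t|t|^{2(\beta-1)}$ and $t\mapsto t|t|^{\beta-1}$ on $[x,y]$. *)

(* Defs.v *)
From Stdlib Require Import Reals Lra.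
Open Scope R_scope.

(* Real power of a nonnegative base, with the usual convention 0^a = 0
   (for the exponents a > 0 used here).  Stdlib's Rpower is exp (a * ln x),
   which gives Rpower 0 a = 1, hence the case split. *)
Definition rpow (x a : R) : R := if Rle_dec x 0 then 0 else Rpower x a.

Definition spow (p t : R) : R := t * rpow (Rabs t) p.

Definition Theta1 (b x y : R) : R :=
  if Req_EM_T x y then 0
  else rpow (/ (2 * b - 1) * ((spow (2 * (b - 1)) x - spow (2 * (b - 1)) y) / (x - y)))
            (/ (2 * (b - 1))).

Definition Theta2 (b x y : R) : R :=
  if Req_EM_T x y then 0
  else rpow (/ b * ((spow (b - 1) x - spow (b - 1) y) / (x - y)))
            (/ (b - 1)).

(* Main.v *)
Require Import Defs.
From Stdlib Require Import Reals Lra.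
From Coquelicot Require Import Coquelicot.
Open Scope R_scope.

Lemma rpow_ge0 x a : 0 <= rpow x a.
Proof. unfold rpow; destruct (Rle_dec x 0); [lra|]. unfold Rpower; left; apply exp_pos. Qed.

Lemma rpow_pos x a : 0 < x -> rpow x a = Rpower x a.
Proof. intros; unfold rpow; destruct (Rle_dec x 0); [lra|auto]. Qed.

Lemma rpow_0 a : rpow 0 a = 0.
Proof. unfold rpow; destruct (Rle_dec 0 0); [auto|lra]. Qed.

Lemma spow_deriv q t : 0 < q ->
  derivable_pt_lim (spow q) t ((q+1) * rpow (Rabs t) q).
Proof.
  intros Hq.
  destruct (Rtotal_order t 0) as [Ht|[Ht|Ht]].
  - apply is_derive_Reals.
    apply is_derive_ext_loc with (f := fun s => - Rpower (-s) (q+1)).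
    + assert (H0 : 0 < -t) by lra.
      exists (mkposreal _ H0). intros s Hs; change R in s.
      unfold ball in Hs; simpl in Hs; unfold AbsRing_ball, abs, minus, plus, opp in Hs; simpl in Hs.
      apply Rabs_def2 in Hs.
      unfold spow. rewrite Rabs_left by lra. rewrite rpow_pos by lra.
      rewrite Rpower_plus, Rpower_1 by lra. match goal with |- ?a = ?b => change (@eq R a b) end; ring.
    + apply is_derive_Reals.
      rewrite Rabs_left by lra. rewrite rpow_pos by lra.
      replace ((q + 1) * Rpower (- t) q) with (- (((q+1) * Rpower (-t) (q+1-1)) * (-1))).
      2:{ replace (q+1-1) with q by ring. ring. }
      apply derivable_pt_lim_opp.
      apply (derivable_pt_lim_comp (fun s => -s) (fun s => Rpower s (q+1))).
      * apply derivable_pt_lim_opp. apply derivable_pt_lim_id.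
      * apply derivable_pt_lim_power. lra.
  - subst t. rewrite Rabs_R0, rpow_0, Rmult_0_r.
    intros eps Heps.
    assert (Hd : 0 < Rpower eps (/q)) by (unfold Rpower; apply exp_pos).
    exists (mkposreal _ Hd). intros h Hh Hhd. simpl in Hhd.
    unfold spow. rewrite Rabs_R0, rpow_0, Rplus_0_l.
    replace ((h * rpow (Rabs h) q - 0 * 0) / h - 0) with (rpow (Rabs h) q) by (field; auto).
    assert (Hp : 0 < Rabs h) by (apply Rabs_pos_lt; auto).
    rewrite rpow_pos by auto.
    rewrite Rabs_pos_eq by (unfold Rpower; left; apply exp_pos).
    replace eps with (Rpower (Rpower eps (/q)) q).
    2:{ rewrite Rpower_mult. replace (/q*q) with 1 by (field; lra). apply Rpower_1; auto. }
    apply Rlt_Rpower_l; lra.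
  - apply is_derive_Reals.
    apply is_derive_ext_loc with (f := fun s => Rpower s (q+1)).
    + exists (mkposreal _ Ht). intros s Hs; change R in s.
      unfold ball in Hs; simpl in Hs; unfold AbsRing_ball, abs, minus, plus, opp in Hs; simpl in Hs.
      apply Rabs_def2 in Hs.
      unfold spow. rewrite Rabs_pos_eq by lra. rewrite rpow_pos by lra.
      rewrite Rpower_plus, Rpower_1 by lra. match goal with |- ?a = ?b => change (@eq R a b) end; ring.
    + apply is_derive_Reals.
      rewrite Rabs_pos_eq by lra. rewrite rpow_pos by lra.
      replace ((q + 1) * Rpower t q) with ((q+1) * Rpower t (q+1-1)) by (f_equal; f_equal; ring).
      apply derivable_pt_lim_power. lra.
Qed.

Lemma mvt2 f f' x y : (forall c, derivable_pt_lim f c (f' c)) -> x <> y ->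
  exists c, f x - f y = f' c * (x-y) /\ 0 < (c-y)*(x-y).
Proof.
  intros D Hxy. destruct (Rlt_or_le x y) as [H|H].
  - destruct (MVT_cor2 f f' x y H (fun c _ => D c)) as [c [E Hc]].
    exists c. split; [lra| nra].
  - assert (H' : y < x) by lra.
    destruct (MVT_cor2 f f' y x H' (fun c _ => D c)) as [c [E Hc]].
    exists c. split; [lra| nra].
Qed.

Lemma rpow_sq t p : 0 < p -> rpow (Rabs t) (2*p) = rpow (Rabs t) p * rpow (Rabs t) p.
Proof.
  intros Hp. destruct (Req_dec t 0) as [->|Ht].
  - rewrite Rabs_R0, !rpow_0. ring.
  - assert (0 < Rabs t) by (apply Rabs_pos_lt; auto).
    rewrite !rpow_pos by auto. rewrite <- Rpower_plus. f_equal; ring.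
Qed.

Section S.
Variable p : R.
Hypothesis Hp : 0 < p.
Let F t := / (2*p+1) * spow (2*p) t.
Let G t := / (p+1) * spow p t.
Let h t := rpow (Rabs t) p.

Lemma dF t : derivable_pt_lim F t (h t * h t).
Proof.
  unfold h; rewrite <- rpow_sq by auto.
  replace (rpow (Rabs t) (2 * p)) with (/ (2*p+1) * ((2*p+1) * rpow (Rabs t) (2 * p))) by (field; lra).
  apply (derivable_pt_lim_scal (spow (2*p))). apply spow_deriv. lra.
Qed.

Lemma dG t : derivable_pt_lim G t (h t).
Proof.
  unfold h.
  replace (rpow (Rabs t) p) with (/ (p+1) * ((p+1) * rpow (Rabs t) p)) by (field; lra).
  apply (derivable_pt_lim_scal (spow p)). apply spow_deriv. lra.
Qed.

Lemma Kineq a x y : 0 <= (x-y)*(F x - F y - 2*a*(G x - G y) + a*a*(x-y)).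
Proof.
  destruct (Req_dec x y) as [->|Hxy]; [nra|].
  set (K := fun s => F s - 2*a*G s + a*a*s).
  assert (D : forall c, derivable_pt_lim K c ((h c - a)*(h c - a))).
  { intro c. unfold K.
    replace ((h c - a)*(h c - a)) with ((h c * h c - 2*a * h c) + a*a*1) by ring.
    apply (derivable_pt_lim_plus (fun s => F s - 2*a*G s) (fun s => a*a*s)).
    - apply (derivable_pt_lim_minus F (fun s => 2*a*G s)).
      + apply dF.
      + apply (derivable_pt_lim_scal G). apply dG.
    - apply (derivable_pt_lim_scal id). apply derivable_pt_lim_id. }
  destruct (mvt2 K _ x y D Hxy) as [c [E _]].
  unfold K in E.
  replace (F x - F y - 2*a*(G x - G y) + a*a*(x-y)) with ((h c - a)*(h c - a)*(x-y)) by lra.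
  pose proof (Rle_0_sqr ((h c - a)*(x-y))); unfold Rsqr in *; nra.
Qed.

Lemma psi_ineq x y : 0 <= (x-y)*(F x - F y) - (G x - G y)*(G x - G y).
Proof.
  destruct (Req_dec x y) as [->|Hxy]; [nra|].
  set (psi := fun s => (s-y)*(F s - F y) - (G s - G y)*(G s - G y)).
  assert (D : forall c, derivable_pt_lim psi c
     (F c - F y - 2*h c*(G c - G y) + h c * h c*(c-y))).
  { intro c. unfold psi.
    replace (F c - F y - 2*h c*(G c - G y) + h c * h c*(c-y)) with
      ((1 * (F c - F y) + (c - y) * (h c * h c)) - (h c * (G c - G y) + (G c - G y) * h c)) by ring.
    apply (derivable_pt_lim_minus (fun s => (s-y)*(F s - F y)) (fun s => (G s - G y)*(G s - G y))).
    - apply (derivable_pt_lim_mult (fun s => s - y) (fun s => F s - F y)).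
      + replace 1 with (1 - 0) by ring.
        apply (derivable_pt_lim_minus id (fun _ => y)).
        * apply derivable_pt_lim_id.
        * apply derivable_pt_lim_const.
      + replace (h c * h c) with (h c * h c - 0) by ring.
        apply (derivable_pt_lim_minus F (fun _ => F y)).
        * apply dF.
        * apply derivable_pt_lim_const.
    - assert (DG : derivable_pt_lim (fun s => G s - G y) c (h c)).
      { replace (h c) with (h c - 0) by ring.
        apply (derivable_pt_lim_minus G (fun _ => G y)).
        * apply dG.
        * apply derivable_pt_lim_const. }
      apply (derivable_pt_lim_mult (fun s => G s - G y) (fun s => G s - G y)); exact DG. }
  destruct (mvt2 psi _ x y D Hxy) as [c [E Hc]].
  pose proof (Kineq (h c) c y) as Kc.
  unfold psi in E.
  replace (y - y) with 0 in E by ring.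
  set (d := F c - F y - 2 * h c * (G c - G y) + h c * h c * (c - y)) in *.
  assert (0 <= d * (x - y)).
  { assert (0 <= ((c-y)*d) * ((c-y)*(x-y))) by nra.
    assert (0 < (c-y)*(c-y)) by (assert (c - y <> 0) by (intro E0; rewrite E0 in Hc; lra); apply (Rsqr_pos_lt (c-y)); auto).
    replace (((c-y)*d) * ((c-y)*(x-y))) with (((c-y)*(c-y)) * (d*(x-y))) in H by ring.
    nra. }
  nra.
Qed.
End S.
Theorem lemma4p4 (beta : R) (hbeta : 1 < beta) (x y : R) :
  Theta1 beta x y >= Theta2 beta x y.
Proof.
  unfold Theta1, Theta2.
  destruct (Req_EM_T x y) as [_|Hxy]; [lra|].
  set (p := beta - 1).
  assert (Hp : 0 < p) by (unfold p; lra).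
  replace (2*beta - 1) with (2*p+1) by (unfold p; ring).
  replace (/ beta) with (/ (p+1)) by (unfold p; f_equal; ring).
  set (S1 := spow (2*p) x - spow (2*p) y).
  set (S2 := spow p x - spow p y).
  set (A := / (2 * p + 1) * (S1 / (x - y))).
  set (B := / (p + 1) * (S2 / (x - y))).
  pose proof (psi_ineq p Hp x y) as Ps. cbv beta in Ps.
  assert (Hu : x - y <> 0) by lra.
  assert (HAB : B * B <= A).
  { assert (E : A - B*B = ((x - y) * (/ (2 * p + 1) * spow (2 * p) x - / (2 * p + 1) * spow (2 * p) y) -
        (/ (p + 1) * spow p x - / (p + 1) * spow p y) * (/ (p + 1) * spow p x - / (p + 1) * spow p y)) / ((x-y)*(x-y))).
    { unfold A, B, S1, S2. field; repeat split; try lra; auto. }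
    assert (0 < (x-y)*(x-y)) by (apply (Rsqr_pos_lt (x-y)); auto).
    assert (0 <= A - B*B). { rewrite E. unfold Rdiv; apply Rmult_le_pos; [lra| left; apply Rinv_0_lt_compat; lra]. }
    lra. }
  unfold rpow at 2. destruct (Rle_dec B 0) as [HB|HB].
  - apply Rle_ge, rpow_ge0.
  - assert (HB' : 0 < B) by lra.
    assert (0 < B*B) by nra.
    rewrite rpow_pos by lra.
    apply Rle_ge.
    replace (Rpower B (/ p)) with (Rpower (B*B) (/ (2*p))).
    + apply Rle_Rpower_l; [left; apply Rinv_0_lt_compat; lra| lra].
    + replace (B*B) with (Rpower B 2).
      * rewrite Rpower_mult. f_equal. field. lra.
      * replace 2 with (INR 2) by (simpl; ring). rewrite Rpower_pow by auto. simpl; ring.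
Qed.
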